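(* Let $K\subset S^3$ be a knot and $M$ its exterior. Let $\rho:\pi_1(M)\to\mathrm{PSL}(2,\mathbb{C})$ be a boundary-parabolic representation. Then the obstruction class of $\rho$, viewed as an element of $H^2(M,\partial M;\{\pm1\})\cong\{\pm1\}$, equals $\tfrac12\mathrm{tr}(\widetilde\rho(\lambda))$, where $\widetilde\rho:\pi_1(M)\to\mathrm{SL}(2,\mathbb{C})$ is any lift of $\rho$ and $\lambda$ is the canonical longitude of $K$.
   Context: $P\subset\mathrm{PSL}(2,\mathbb{C})$ (resp. $\mathrm{SL}(2,\mathbb{C})$) denotes the subgroup of upper triangular matrices with ones on the diagonal. A representation is boundary-parabolic if it maps the peripheral subgroup $\pi_1(\partial M)$ into a conjugate of $P$. The obstruction class of a boundary-parabolic $\rho$ is the obstruction in $H^2(M,\partial M;\{\pm1\})$ to lifting $\rho$ to a boundary-parabolic $\mathrm{SL}(2,\mathbb{C})$-representation (image of $\rho$ under the connecting map associated with $1\to\{\pm1\}\to\mathrm{SL}(2,\mathbb{C})\to\mathrm{PSL}(2,\mathbb{C})\to1$ on cocycles that take values in $P$ on $\partial M$); under $H^2(M,\partial M;\{\pm1\})\cong\{\pm1\}$ it is $+1$ iff such a lift exists. *)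

(* Defs.v *)
(* Knots are presented as closures of braids (Alexander's
   theorem), pi_1 of the exterior via the Wirtinger/Artin presentation of the
   closed-braid diagram. *)
From mathcomp Require Import all_boot all_order all_algebra.
From mathcomp Require Import complex reals.

Set Implicit Arguments.
Unset Strict Implicit.
Unset Printing Implicit Defensive.
Import Order.TTheory GRing.Theory Num.Theory.
Local Open Scope ring_scope.

Section BraidKnot.
Variable F : fieldType.
Notation M := 'M[F]_2.

(* A braid word on n strands: a generator is (k, true) = sigma_k,
   (k, false) = sigma_k^{-1}, acting on positions k, k+1 (0-based). *)
Definition braid_word := seq (nat * bool).

Definition braid_word_ok (n : nat) (w : braid_word) : bool :=
  all (fun g => (g.1.+1 < n)%N) w.

Definition pos_step (g : nat * bool) (p : nat) : nat :=
  if p == g.1 then g.1.+1 else if p == g.1.+1 then g.1 else p.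
Definition braid_perm (w : braid_word) (p : nat) : nat :=
  foldl (fun q g => pos_step g q) p w.

(* the closure of the braid is a knot (one component): the permutation
   acts transitively (as a single n-cycle) on the positions 0..n-1 *)
Definition closure_is_knot (n : nat) (w : braid_word) : Prop :=
  (0 < n)%N /\ forall p, (p < n)%N -> exists j, iter j (braid_perm w) 0%N = p.

(* Wirtinger (Artin) labels: meridian label of the arc at each position,
   propagated through one crossing.  The over-strand keeps its label, the
   under-strand label is conjugated by the over-strand label. *)
Definition wstep (g : nat * bool) (a : nat -> M) : nat -> M :=
  fun p =>
    let k := g.1 in
    if g.2 then
      (if p == k then a k * a k.+1 * (a k)^-1
       else if p == k.+1 then a k else a p)
    else
      (if p == k then a k.+1
       else if p == k.+1 then (a k.+1)^-1 * a k * a k.+1 else a p).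

Definition wlabels (w : braid_word) (a : nat -> M) : nat -> M :=
  foldl (fun b g => wstep g b) a w.

(* One pass of the walk along the knot through the braid, starting at
   position p with accumulated word P.  Every time the walk passes under
   the over-strand with label x at a crossing where the under-arc label is
   conjugated by x^e, the word becomes x^e * P. *)
Definition walk_step (g : nat * bool) (s : (nat -> M) * nat * M)
    : (nat -> M) * nat * M :=
  let: (b, p, P) := s in
  let k := g.1 in
  let b' := wstep g b in
  if g.2 then
    (if p == k then (b', k.+1, P)
     else if p == k.+1 then (b', k, b k * P) else (b', p, P))
  else
    (if p == k.+1 then (b', k, P)
     else if p == k then (b', k.+1, (b k.+1)^-1 * P) else (b', p, P)).

Definition walk_pass (w : braid_word) (a : nat -> M) (s : nat * M) : nat * M :=
  let: (b, p, P) := foldl (fun t g => walk_step g t) (a, s.1, s.2) w in (p, P).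

Definition exp_sum (w : braid_word) : int :=
  \sum_(g <- w) (if g.2 then 1 else -1).

(* meridian of the knot: the arc at position 0 at the top of the braid *)
Definition meridian_img (a : nat -> M) : M := a 0%N.

(* canonical (null-homologous) longitude: blackboard parallel read off
   along the n passes, corrected by the meridian to the power -writhe *)
Definition longitude_img (n : nat) (w : braid_word) (a : nat -> M) : M :=
  (iter n (walk_pass w a) (0%N, 1)).2 * (a 0%N) ^ (- exp_sum w).

(* A PSL(2,F)-representation of the knot group, given by SL(2,F)
   representatives a p of the images of the Wirtinger generators: the
   closing relations hold in PSL, i.e. up to sign. *)
Definition psl_rep (n : nat) (w : braid_word) (a : nat -> M) : Prop :=
  (forall p, (p < n)%N -> \det (a p) = 1) /\
  (forall p, (p < n)%N -> wlabels w a p = a p \/ wlabels w a p = - a p).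

Definition sl_lift (n : nat) (w : braid_word) (a h : nat -> M) : Prop :=
  (forall p, (p < n)%N -> h p = a p \/ h p = - a p) /\
  (forall p, (p < n)%N -> wlabels w h p = h p).

Definition in_P (A : M) : Prop :=
  A 1 0 = 0 /\ A 0 0 = 1 /\ A 1 1 = 1.
Definition in_P_pm (A : M) : Prop := in_P A \/ in_P (- A).

(* boundary-parabolic: the peripheral subgroup <meridian, longitude> is
   mapped into a conjugate of P (in PSL) *)
Definition psl_boundary_parabolic (n : nat) (w : braid_word) (a : nat -> M)
    : Prop :=
  exists B : M, \det B = 1 /\
    in_P_pm (B^-1 * meridian_img a * B) /\
    in_P_pm (B^-1 * longitude_img n w a * B).

Definition sl_boundary_parabolic (n : nat) (w : braid_word) (h : nat -> M)
    : Prop :=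
  exists B : M, \det B = 1 /\
    in_P (B^-1 * meridian_img h * B) /\
    in_P (B^-1 * longitude_img n w h * B).

(* obstruction class, as an element of {1, -1} (the image of
   H^2(M, dM; {+-1}) = {+-1}): +1 iff a boundary-parabolic SL lift exists *)
Definition obstruction_class (n : nat) (w : braid_word) (a : nat -> M)
    (e : F) : Prop :=
  (e = 1 /\ exists h, sl_lift n w a h /\ sl_boundary_parabolic n w h) \/
  (e = -1 /\ ~ exists h, sl_lift n w a h /\ sl_boundary_parabolic n w h).

End BraidKnot.

(* Main.v *)
Require Import Defs.
From mathcomp Require Import all_boot all_order all_algebra.
From mathcomp Require Import complex reals.
From mathcomp Require Import zify.
Import GRing.Theory Num.Theory.

Definition under (g : nat * bool) (p : nat) : nat :=
  if g.2 then (p == g.1.+1) else (p == g.1).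
Fixpoint cnt (w : braid_word) (p : nat) : nat :=
  match w with [::] => 0%N | g :: w' => (under g p + cnt w' (pos_step g p))%N end.
Definition sig_perm (w : braid_word) (q : nat) : nat := foldr pos_step q w.

Lemma pos_stepK g : involutive (pos_step g).
Proof.
move: g => [k b] p; rewrite /pos_step /=.
by repeat (case: eqP => /=); lia.
Qed.

Lemma pos_step_lt n g p : (g.1.+1 < n)%N -> (p < n)%N -> (pos_step g p < n)%N.
Proof.
case: g => k b /= hk hp; rewrite /pos_step /=.
by repeat (case: eqP => /=); lia.
Qed.

Lemma braid_perm_cons g w p : braid_perm (g :: w) p = braid_perm w (pos_step g p).
Proof. by []. Qed.

Lemma braid_perm_lt n w p : braid_word_ok n w -> (p < n)%N -> (braid_perm w p < n)%N.
Proof.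
elim: w p => [//|g w IH] p /andP[hg hw] hp.
by rewrite braid_perm_cons; apply: IH => //; apply: pos_step_lt.
Qed.

Lemma sigK w p : sig_perm w (braid_perm w p) = p.
Proof.
elim: w p => [//|g w IH] p.
by rewrite braid_perm_cons /sig_perm /= -/(sig_perm w _) IH pos_stepK.
Qed.

Lemma perm_pos_step n g : (g.1.+1 < n)%N ->
  perm_eq [seq pos_step g p | p <- iota 0 n] (iota 0 n).
Proof.
move=> hg; apply: uniq_perm; first by rewrite map_inj_uniq ?iota_uniq //; apply: (can_inj (pos_stepK g)).
  exact: iota_uniq.
move=> x; rewrite mem_iota /= add0n; apply/mapP/idP => [[y]|hx].
  by rewrite mem_iota add0n /= => hy ->; apply: pos_step_lt.
by exists (pos_step g x); rewrite ?pos_stepK // mem_iota add0n pos_step_lt.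
Qed.

Lemma sum_under n g : (g.1.+1 < n)%N -> (\sum_(p <- iota 0 n) under g p)%N = 1%N.
Proof.
move=> hg.
have -> : (\sum_(p <- iota 0 n) under g p)%N =
   count_mem (if g.2 then g.1.+1 else g.1) (iota 0 n).
  rewrite -sum1_count [RHS]big_mkcond /=; apply: eq_bigr => p _.
  by rewrite /under; case: g.2; rewrite // eq_sym; case: eqP.
rewrite count_uniq_mem ?iota_uniq // mem_iota add0n /=.
by case: g.2 hg => /= hg; apply/eqP; rewrite eqb1; lia.
Qed.

Lemma sum_cnt n w : braid_word_ok n w -> (\sum_(p <- iota 0 n) cnt w p)%N = size w.
Proof.
elim: w => [|g w IH] /=; first by rewrite big1.
move=> /andP[hg hw]; rewrite big_split /= sum_under //.
by rewrite -(big_map (pos_step g) xpredT (cnt w)) (perm_big _ (@perm_pos_step n g hg)) IH.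
Qed.

Lemma iter_inj (f : nat -> nat) i : injective f -> injective (iter i f).
Proof. by move=> fi; elim: i => [//|i IH] x y /= /fi /IH. Qed.

Lemma iter_mod (f : nat -> nat) d m : iter d f 0%N = 0%N -> iter m f 0%N = iter (m %% d) f 0%N.
Proof.
move=> hd; rewrite {1}(divn_eq m d) addnC iterD; congr iter.
by elim: (m %/ d) => [//|q IH]; rewrite mulSn iterD IH hd.
Qed.

Lemma orbit_perm n w : braid_word_ok n w -> closure_is_knot n w ->
  perm_eq [seq iter i (braid_perm w) 0%N | i <- iota 0 n] (iota 0 n).
Proof.
move=> ok [n0 hk]; set f := braid_perm w.
have finj : injective f by apply: (can_inj (@sigK w)).
have itlt : forall i, (iter i f 0 < n)%N.
  by elim=> [//|i IH] /=; apply: braid_perm_lt.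
have key : forall i j, (i < j < n)%N -> iter i f 0 <> iter j f 0.
  move=> i j /andP[hij hjn] heq.
  move: heq; rewrite -(subnKC (ltnW hij)) iterD => /iter_inj => /(_ finj) hd.
  have hd0 : (0 < j - i)%N by rewrite subn_gt0.
  have : {subset iota 0 n <= [seq iter m f 0 | m <- iota 0 (j - i)]}.
    move=> p; rewrite mem_iota add0n /= => /hk [m <-].
    rewrite (@iter_mod f (j - i) m (esym hd)); apply: map_f.
    by rewrite mem_iota add0n /= ltn_mod.
  move=> /(uniq_leq_size (iota_uniq 0 n)); rewrite size_map !size_iota.
  by move: hjn; rewrite -(subnKC (ltnW hij)); lia.
have us : uniq [seq iter i f 0 | i <- iota 0 n].
  rewrite map_inj_in_uniq ?iota_uniq // => i j; rewrite !mem_iota !add0n /= => hi hj heq.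
  case: (ltngtP i j) => // hij.
    by exfalso; apply: (key i j) => //; rewrite hij hj.
  by exfalso; apply: (key j i) => //; rewrite hij hi.
apply: uniq_perm => //; first exact: iota_uniq.
apply: (uniq_min_size us _ _).2.
  by move=> x /mapP [i _ ->]; rewrite mem_iota add0n /= itlt.
by rewrite size_map.
Qed.

Module Helpers.
Set Implicit Arguments.
Unset Strict Implicit.
Local Open Scope ring_scope.

Section Alg.
Variable F : fieldType.
Notation M := 'M[F]_2.

Definition pm1 (t : F) := t = 1 \/ t = -1.

Lemma pm1M x y : pm1 x -> pm1 y -> pm1 (x * y).
Proof. by case=> ->; case=> ->; rewrite ?mulr1 ?mul1r ?mulrNN ?mulr1; [left|right|right|left]. Qed.

Lemma pm1_sq x : pm1 x -> x * x = 1.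
Proof. by case=> ->; rewrite ?mulr1 ?mulrNN ?mulr1. Qed.

Lemma pm1X x m : pm1 x -> pm1 (x ^+ m).
Proof. by move=> hx; elim: m => [|m IH]; [left; rewrite expr0 | rewrite exprS; apply: pm1M]. Qed.

Lemma pm1_invZ t (A : M) : pm1 t -> (t *: A)^-1 = t *: A^-1.
Proof. by case=> ->; rewrite ?scale1r // !scaleN1r invrN. Qed.

Lemma pm1_inv t : pm1 t -> t^-1 = t.
Proof. by case=> ->; rewrite ?invr1 // invrN invr1. Qed.

Lemma scM x y (A B : M) : (x *: A) * (y *: B) = (x * y) *: (A * B).
Proof. by rewrite -scalerAl -scalerAr scalerA. Qed.

Definition sstep (g : nat * bool) (c : nat -> F) (p : nat) : F :=
  if g.2 then (if p == g.1.+1 then c g.1 else 1)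
  else (if p == g.1 then c g.1.+1 else 1).

Fixpoint wsig (w : braid_word) (c : nat -> F) (p : nat) : F :=
  match w with
  | [::] => 1
  | g :: w' => sstep g c p * wsig w' (fun q => c (pos_step g q)) (pos_step g p)
  end.

Lemma wsig_pm1 w c p : (forall q, pm1 (c q)) -> pm1 (wsig w c p).
Proof.
elim: w c p => [|g w IH] c p hc /=; first by left.
apply: pm1M; last by apply: IH.
by rewrite /sstep; case: g.2; case: eqP => _; rewrite ?hc //; left.
Qed.

Lemma wsig_const w e p : wsig w (fun _ => e) p = e ^+ cnt w p.
Proof.
elim: w p => [|g w IH] p /=; first by rewrite expr0.
rewrite IH exprD /sstep /under; congr (_ * _).
by case: g.2; case: eqP.
Qed.

Lemma wstep_rel n g c (b1 b2 : nat -> M) :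
  (g.1.+1 < n)%N -> (forall q, pm1 (c q)) ->
  (forall q, (q < n)%N -> b2 q = c q *: b1 q) ->
  forall q, (q < n)%N -> wstep g b2 q = c (pos_step g q) *: wstep g b1 q.
Proof.
move: g => [k []] /= hk hc hb q hq; rewrite /wstep /pos_step /=.
- have [e1|h1] := eqVneq q k; first subst q.
    rewrite !hb //; try lia.
    rewrite pm1_invZ // !scM; congr (_ *: _).
    by rewrite mulrC mulrA pm1_sq ?mul1r.
  have [e2|h2] := eqVneq q k.+1; first subst q.
    by rewrite hb //; lia.
  by rewrite hb.
- have [e1|h1] := eqVneq q k; first subst q.
    by rewrite hb.
  have [e2|h2] := eqVneq q k.+1; first subst q.
    rewrite !hb //; try lia.
    rewrite pm1_invZ // !scM; congr (_ *: _).
    by rewrite mulrC mulrA pm1_sq ?mul1r.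
  by rewrite hb.
Qed.

Lemma wlabels_cons g w (b : nat -> M) : wlabels (g :: w) b = wlabels w (wstep g b).
Proof. by []. Qed.

Lemma wlabels_rel n w c (b1 b2 : nat -> M) :
  braid_word_ok n w -> (forall q, pm1 (c q)) ->
  (forall q, (q < n)%N -> b2 q = c q *: b1 q) ->
  forall q, (q < n)%N -> wlabels w b2 q = c (sig_perm w q) *: wlabels w b1 q.
Proof.
elim: w c b1 b2 => [|g w IH] c b1 b2; first by move=> _ _ hb q hq; rewrite /= hb.
move=> /andP[hg hw] hc hb q hq; rewrite !wlabels_cons.
apply: (IH (fun q => c (pos_step g q))) => //.
exact: wstep_rel.
Qed.

Definition wfold (w : braid_word) (s : (nat -> M) * nat * M) :=
  foldl (fun t g => walk_step g t) s w.

Lemma walk_step_rel n g c (b1 b2 : nat -> M) p P s :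
  (g.1.+1 < n)%N -> (forall q, pm1 (c q)) ->
  (forall q, (q < n)%N -> b2 q = c q *: b1 q) ->
  walk_step g (b2, p, s *: P) =
   (wstep g b2, (walk_step g (b1, p, P)).1.2,
    (s * sstep g c p) *: (walk_step g (b1, p, P)).2)
  /\ (walk_step g (b1, p, P)).1.1 = wstep g b1
  /\ (walk_step g (b1, p, P)).1.2 = pos_step g p.
Proof.
move: g => [k []] /= hk hc hb; rewrite /sstep /pos_step /=.
- have [e1|h1] := eqVneq p k.
    by subst p; rewrite (ltn_eqF (ltnSn k)) /= mulr1; repeat split.
  have [e2|h2] := eqVneq p k.+1 => /=.
    subst p; rewrite hb; last lia.
    by rewrite scM mulrC; repeat split.
  by rewrite mulr1; repeat split.
- have [e2|h2] := eqVneq p k.+1 => /=.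
    by subst p; rewrite (gtn_eqF (ltnSn k)) /= mulr1; repeat split.
  have [e1|h1] := eqVneq p k => /=.
    subst p; rewrite hb; last lia.
    by rewrite pm1_invZ // scM mulrC; repeat split.
  by rewrite mulr1; repeat split.
Qed.

Lemma walk_rel n w c (b1 b2 : nat -> M) p P s :
  braid_word_ok n w -> (forall q, pm1 (c q)) ->
  (forall q, (q < n)%N -> b2 q = c q *: b1 q) ->
  (wfold w (b2, p, s *: P)).1.2 = (wfold w (b1, p, P)).1.2 /\
  (wfold w (b2, p, s *: P)).2 = (s * wsig w c p) *: (wfold w (b1, p, P)).2.
Proof.
elim: w c b1 b2 p P s => [|g w IH] c b1 b2 p P s; first by rewrite /= mulr1.
move=> /andP[hg hw] hc hb.
have [e1 [e2 e3]] := walk_step_rel p P s hg hc hb.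
have fc : forall s0 : (nat -> M) * nat * M, wfold (g :: w) s0 = wfold w (walk_step g s0) by [].
rewrite !fc e1.
case E: (walk_step g (b1, p, P)) e2 e3 => [[b1' p'] P'] /= e2 e3.
subst b1' p'.
have := IH (fun q => c (pos_step g q)) (wstep g b1) (wstep g b2) (pos_step g p) P' (s * sstep g c p) hw.
move/(_ (fun q => hc _) (wstep_rel hg hc hb)) => [-> ->].
by rewrite mulrA.
Qed.

Lemma walk_pos w (b : nat -> M) p P : (wfold w (b, p, P)).1.2 = braid_perm w p.
Proof.
elim: w b p P => [//|g w IH] b p P.
have fc : forall s0 : (nat -> M) * nat * M, wfold (g :: w) s0 = wfold w (walk_step g s0) by [].
rewrite fc braid_perm_cons.
have -> : walk_step g (b, p, P) = (wstep g b, pos_step g p, (walk_step g (b, p, P)).2).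
  clear fc IH; move: g => [k []]; rewrite /walk_step /pos_step /=.
    by case: eqP => _ //; case: eqP.
  have [e2|h2] := eqVneq p k.+1; first by subst p; rewrite (gtn_eqF (ltnSn k)).
  by case: eqP.
exact: IH.
Qed.
End Alg.


Section Alg2.
Variable F : fieldType.
Notation M := 'M[F]_2.

Lemma expzZ (t : F) (A : M) (z : int) : pm1 t -> (t *: A) ^ z = t ^ z *: A ^ z.
Proof.
move=> ht; case: z => m.
  by rewrite /exprz exprZn.
rewrite /exprz exprZn pm1_invZ; last exact: pm1X.
by rewrite pm1_inv //; apply: pm1X.
Qed.

Lemma pm1_expz (t : F) (z : int) : pm1 t -> pm1 (t ^ z).
Proof.
move=> ht; case: z => m; rewrite /exprz; first exact: pm1X.
by rewrite pm1_inv; apply: pm1X.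
Qed.

Lemma expz_pm1_abs (t : F) (z : int) : pm1 t -> t ^ z = t ^+ `|z|%N.
Proof.
move=> ht; case: z => m; rewrite /exprz //.
by rewrite pm1_inv //; apply: pm1X.
Qed.

Lemma expz_exp_sum (e : F) w : pm1 e -> e ^ (- exp_sum w) = e ^+ size w.
Proof.
move=> he; rewrite expz_pm1_abs // abszN -expz_pm1_abs //.
elim: w => [|g w IH]; first by rewrite /exp_sum big_nil expr0z.
rewrite /exp_sum big_cons -/(exp_sum w) exprzDr; last first.
  by case: he => ->; rewrite ?unitr1 ?unitrN1.
rewrite IH /= exprS; congr (_ * _).
by case: g.2; rewrite ?expr1z ?exprN1 ?pm1_inv.
Qed.

Lemma walk_pass_eq w (b : nat -> M) s :
  walk_pass w b s = ((wfold w (b, s.1, s.2)).1.2, (wfold w (b, s.1, s.2)).2).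
Proof. by rewrite /walk_pass /wfold; case: foldl => [[? ?] ?]. Qed.

Lemma passes_rel n w c (h1 h2 : nat -> M) :
  braid_word_ok n w -> (forall q, pm1 (c q)) ->
  (forall q, (q < n)%N -> h2 q = c q *: h1 q) ->
  forall j, (iter j (walk_pass w h1) (0%N, 1)).1 = iter j (braid_perm w) 0%N /\
   iter j (walk_pass w h2) (0%N, 1) =
     ((iter j (walk_pass w h1) (0%N, 1)).1,
      (\prod_(i < j) wsig w c (iter i (braid_perm w) 0%N)) *:
        (iter j (walk_pass w h1) (0%N, 1)).2).
Proof.
move=> ok hc hb; elim=> [|j [IH1 IH2]].
  by rewrite /= big_ord0 scale1r.
rewrite /= IH2 !walk_pass_eq /= walk_pos IH1; split => //.
have [e1 e2] := walk_rel (iter j (braid_perm w) 0%N) (iter j (walk_pass w h1) (0%N, 1)).2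
   (\prod_(i < j) wsig w c (iter i (braid_perm w) 0%N)) ok hc hb.
by rewrite e1 e2 walk_pos big_ord_recr.
Qed.

Lemma longitude_rel n w c (h1 h2 : nat -> M) :
  (0 < n)%N -> braid_word_ok n w -> (forall q, pm1 (c q)) ->
  (forall q, (q < n)%N -> h2 q = c q *: h1 q) ->
  longitude_img n w h2 =
   ((\prod_(i < n) wsig w c (iter i (braid_perm w) 0%N)) * c 0%N ^ (- exp_sum w))
     *: longitude_img n w h1.
Proof.
move=> n0 ok hc hb; rewrite /longitude_img.
have [_ ->] := passes_rel ok hc hb n.
by rewrite /= hb // expzZ // scM.
Qed.
End Alg2.


Section Main.
Variable F : fieldType.
Notation M := 'M[F]_2.

Lemma pm1_prod (I : Type) (r : seq I) (f : I -> F) :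
  (forall i, pm1 (f i)) -> pm1 (\prod_(i <- r) f i).
Proof.
move=> hf; elim: r => [|x r IH]; first by rewrite big_nil; left.
by rewrite big_cons; apply: pm1M.
Qed.

Lemma const_long n w (e : F) (h1 h2 : nat -> M) :
  braid_word_ok n w -> closure_is_knot n w -> pm1 e ->
  (forall q, (q < n)%N -> h2 q = e *: h1 q) ->
  longitude_img n w h2 = longitude_img n w h1.
Proof.
move=> ok kn he hb; have n0 := kn.1.
rewrite (@longitude_rel _ n w (fun _ => e) h1 h2) //; try by move=> _.
rewrite expz_exp_sum //.
under eq_bigr do rewrite wsig_const.
rewrite prodrXr.
have -> : (\sum_(i < n) cnt w (iter i (braid_perm w) 0%N))%N = size w.
  rewrite -(big_mkord xpredT (fun i => cnt w (iter i (braid_perm w) 0%N))).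
  rewrite /index_iota subn0 -(big_map (fun i => iter i (braid_perm w) 0%N) xpredT (cnt w)).
  by rewrite (perm_big _ (@orbit_perm n w ok kn)) (@sum_cnt n w ok).
by rewrite -exprMn pm1_sq // expr1n scale1r.
Qed.

Lemma det_nz (A : M) : \det A = 1 -> A != 0.
Proof. by move=> hd; apply/eqP => hA; move: hd; rewrite hA det0 => /eqP; rewrite eq_sym oner_eq0. Qed.

Lemma lift_eps n w (a h h' : nat -> M) :
  braid_word_ok n w -> closure_is_knot n w -> psl_rep n w a ->
  sl_lift n w a h -> sl_lift n w a h' ->
  exists e : F, pm1 e /\ forall q, (q < n)%N -> h' q = e *: h q.
Proof.
move=> ok [n0 kn] [hdet _] [hh hhw] [hh' hh'w].
pose eps q : F := if h' q == h q then 1 else -1.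
have he : forall q, pm1 (eps q) by move=> q; rewrite /eps; case: eqP; [left|right].
have hrel : forall q, (q < n)%N -> h' q = eps q *: h q.
  move=> q hq; rewrite /eps; case: eqP => [->|ne]; first by rewrite scale1r.
  rewrite scaleN1r.
  by case: (hh' q hq) => e1; case: (hh q hq) => e2; rewrite e1 e2 in ne *; rewrite ?opprK //; case: ne.
have hnz : forall q, (q < n)%N -> h q != 0.
  move=> q hq; case: (hh q hq) => ->; first exact: det_nz (hdet q hq).
  by rewrite oppr_eq0; apply: det_nz (hdet q hq).
have hsig : forall q, (q < n)%N -> eps (sig_perm w q) = eps q.
  move=> q hq.
  have := wlabels_rel ok he hrel hq; rewrite hh'w // hhw // hrel // => /eqP.
  rewrite -subr_eq0 -scalerBl scaler_eq0 (negbTE (hnz q hq)) orbF subr_eq0 => /eqP.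
  by move=> ->.
have hstep : forall p, (p < n)%N -> eps (braid_perm w p) = eps p.
  move=> p hp; rewrite -{2}(sigK w p) hsig //; exact: (@braid_perm_lt n w p ok hp).
have hit : forall j, eps (iter j (braid_perm w) 0%N) = eps 0%N.
  elim=> [//|j IH] /=; rewrite hstep // ; last first.
  elim: j {IH} => [//|j IHj] /=; exact: (@braid_perm_lt n w _ ok IHj).
exists (eps 0%N); split => // q hq.
by have [j ej] := kn q hq; rewrite hrel // -ej hit.
Qed.
End Main.


Section Main2.
Variable F : fieldType.
Notation M := 'M[F]_2.

Lemma neg_lift n w (a h : nat -> M) :
  braid_word_ok n w -> sl_lift n w a h -> sl_lift n w a (fun q => - h q).
Proof.
move=> ok [hh hw]; split.
  by move=> q hq; case: (hh q hq) => ->; rewrite ?opprK; [right|left].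
move=> q hq.
have := @wlabels_rel F n w (fun _ => -1) h (fun q => - h q) ok.
move=> /(_ (fun _ => or_intror erefl)) /(_ (fun q _ => esym (scaleN1r (h q)))) /(_ q hq).
by rewrite scaleN1r hw.
Qed.

Lemma tr_inP (U : M) : in_P U -> \tr U = 2%:R.
Proof.
move=> [_ [h0 h1]].
rewrite /mxtrace big_ord_recl big_ord1.
have -> : (lift ord0 ord0 : 'I_2) = 1 by apply/val_inj.
by rewrite h0 h1.
Qed.

Lemma tr_conj (B X : M) : \det B = 1 -> \tr (B^-1 * X * B) = \tr X.
Proof.
move=> hB; have uB : B \is a GRing.unit.
  by rewrite -[_ \is a _]/(B \in unitmx) unitmxE hB unitr1.
by rewrite -mulrA -!mulmxE mxtrace_mulC !mulmxE -mulrA mulrV // mulr1.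
Qed.

Lemma trN (X : M) : \tr (- X) = - \tr X.
Proof. by rewrite -scaleN1r mxtraceZ mulN1r. Qed.

Lemma conjZ (B X : M) t : B^-1 * (t *: X) * B = t *: (B^-1 * X * B).
Proof. by rewrite -scalerAr -scalerAl. Qed.

Lemma pm_inP (t : F) (X : M) : pm1 t -> in_P_pm X -> in_P (t *: X) \/ in_P (- (t *: X)).
Proof.
by case=> ->; rewrite ?scale1r ?scaleN1r ?opprK; case; [left|right|right|left].
Qed.

Theorem main_gen n w (a : nat -> M) :
  (2%:R : F) != 0 ->
  braid_word_ok n w -> closure_is_knot n w ->
  psl_rep n w a -> psl_boundary_parabolic n w a ->
  forall h : nat -> M, sl_lift n w a h ->
    obstruction_class n w a (\tr (longitude_img n w h) / 2%:R).
Proof.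
move=> two ok kn prep [B [detB [hmu hlam]]] h lift.
have n0 := kn.1.
pose c q : F := if h q == a q then 1 else -1.
have hc : forall q, pm1 (c q) by move=> q; rewrite /c; case: eqP; [left|right].
have hca : forall q, (q < n)%N -> h q = c q *: a q.
  move=> q hq; rewrite /c; case: eqP => [->|ne]; first by rewrite scale1r.
  by rewrite scaleN1r; case: (lift.1 q hq).
have hl := @longitude_rel F n w c a h n0 ok hc hca.
set t := (_ * _) in hl.
have ht : pm1 t.
  apply: pm1M; last exact: pm1_expz.
  by rewrite -(big_map (fun i : 'I_n => i) xpredT (fun i => wsig w c (iter i (braid_perm w) 0%N))); apply: pm1_prod => i; apply: wsig_pm1.
have hX : in_P (B^-1 * longitude_img n w h * B) \/ in_P (- (B^-1 * longitude_img n w h * B)).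
  by rewrite hl conjZ; apply: pm_inP.
have hY : in_P (B^-1 * meridian_img h * B) \/ in_P (- (B^-1 * meridian_img h * B)).
  by rewrite /meridian_img hca // conjZ; apply: pm_inP.
have trL : \tr (longitude_img n w h) = \tr (B^-1 * longitude_img n w h * B) by rewrite tr_conj.
case: hX => hX.
  left; split; first by rewrite trL tr_inP // divff.
  case: hY => hY.
    by exists h; split => //; exists B.
  exists (fun q => - h q); split; first exact: neg_lift.
  exists B; split => //; split.
    by rewrite /meridian_img mulrN mulNr.
  rewrite (@const_long F n w (-1) h) //; first by right.
  by move=> q _; rewrite scaleN1r.
right; split.
  by rewrite trL -[X in \tr X]opprK trN tr_inP // mulNr divff.
move=> [h' [lift' [B' [detB' [_ hl']]]]].
have [e [he hre]] := lift_eps ok kn prep lift lift'.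
have eqL := const_long ok kn he hre.
have : \tr (longitude_img n w h') = 2%:R by rewrite -(tr_conj _ detB') tr_inP.
rewrite eqL trL -[X in \tr X]opprK trN tr_inP // => e2.
have : (2%:R : F) * 2%:R == 0 by rewrite mulr_natr mulr2n -{1}e2 addNr.
by rewrite mulf_eq0 (negbTE two).
Qed.
End Main2.

End Helpers.
Import Helpers.
Local Open Scope ring_scope.
Local Open Scope complex_scope.

Theorem proposition2p2 (R : realType) (n : nat) (w : braid_word)
    (a : nat -> 'M[R[i]]_2) :
  braid_word_ok n w -> closure_is_knot n w ->
  psl_rep n w a -> psl_boundary_parabolic n w a ->
  forall h : nat -> 'M[R[i]]_2, sl_lift n w a h ->
    obstruction_class n w a (\tr (longitude_img n w h) / 2%:R).
Proof.
apply: main_gen.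
by rewrite pnatr_eq0.
Qed.
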